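(* Let $\mathbf{L}=\langle L,\leq,0,1\rangle$ be a totally ordered complete lattice and let $\mathcal{D}_1,\mathcal{D}_2$ be ranked data tables on the same relation scheme $R$. Then $\mathcal{D}_1 \sqsubseteq \mathcal{D}_2$ if and only if there exists an order-preserving map $f\colon L\to L$ such that $\mathcal{D}_1\circ f=\mathcal{D}_2$.
   Context: A relation scheme $R$ is a finite set of attributes, each with a (at most countable) set of admissible values; a tuple on $R$ assigns to each attribute of $R$ an admissible value; $\mathrm{Tupl}(R)$ is the set of all tuples on $R$. A ranked data table (RDT) on $R$ is a map $\mathcal{D}\colon\mathrm{Tupl}(R)\to L$ with $\{r;\ \mathcal{D}(r)>0\}$ finite. For an RDT $\mathcal{D}$ and $r\in\mathrm{Tupl}(R)$, $\mathcal{U}(\mathcal{D},r)=\{r'\in\mathrm{Tupl}(R);\ \mathcal{D}(r')\geq\mathcal{D}(r)\}$; $\mathcal{D}_1\sqsubseteq\mathcal{D}_2$ means $\mathcal{U}(\mathcal{D}_1,r)\subseteq\mathcal{U}(\mathcal{D}_2,r)$ for all $r\in\mathrm{Tupl}(R)$. A map $f$ is order preserving if $a\leq b$ implies $f(a)\leq f(b)$. For a map $f$ on a subset of $L$ containing the values of $\mathcal{D}$, $\mathcal{D}\circ f$ denotes the map $r\mapsto f(\mathcal{D}(r))$. *)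

(* Defs.v *)
From HB Require Import structures.
From Stdlib Require List.
From mathcomp Require Import all_boot all_order.
Set Implicit Arguments. Unset Strict Implicit. Unset Printing Implicit Defensive.
Import Order.TTheory.
Local Open Scope order_scope.

Definition complete_lattice (d : Order.disp_t) (L : porderType d) : Prop :=
  forall P : L -> Prop, exists s : L,
    (forall x, P x -> x <= s) /\ (forall u, (forall x, P x -> x <= u) -> s <= u).

(* A relation scheme: a finite set of attributes [A], each attribute [a]
   having a (at most countable) domain [dom a]. *)
Definition Tupl (A : finType) (dom : A -> countType) := forall a : A, dom a.

Definition is_RDT (A : finType) (dom : A -> countType) (d : Order.disp_t)
  (L : tbOrderType d) (D : Tupl dom -> L) : Prop :=
  exists s : list (Tupl dom), forall r, \bot < D r -> List.In r s.

Definition U (A : finType) (dom : A -> countType) (d : Order.disp_t)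
  (L : tbOrderType d) (D : Tupl dom -> L) (r : Tupl dom) : Tupl dom -> Prop :=
  fun r' => D r <= D r'.

Definition rdt_le (A : finType) (dom : A -> countType) (d : Order.disp_t)
  (L : tbOrderType d) (D1 D2 : Tupl dom -> L) : Prop :=
  forall r r', U D1 r r' -> U D2 r r'.

(* Main.v *)
Require Import Defs.
From mathcomp Require Import all_boot all_order.
From Stdlib Require Import ClassicalEpsilon.
Import Order.TTheory.
Local Open Scope order_scope.

Theorem theorem4 (d : Order.disp_t) (L : tbOrderType d)
  (HL : complete_lattice L)
  (A : finType) (dom : A -> countType) (D1 D2 : Tupl dom -> L)
  (HD1 : is_RDT D1) (HD2 : is_RDT D2) :
  rdt_le D1 D2 <->
  exists f : L -> L, {homo f : x y / x <= y} /\ (forall r, f (D1 r) = D2 r).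
Proof.
split.
- move=> H.
  pose sup (P : L -> Prop) := proj1_sig (constructive_indefinite_description _ (HL P)).
  have supP : forall P, (forall x, P x -> x <= sup P) /\
      (forall u, (forall x, P x -> x <= u) -> sup P <= u).
    by move=> P; rewrite /sup; case: (constructive_indefinite_description _ _).
  exists (fun x => sup (fun y => exists r, D1 r <= x /\ y = D2 r)).
  split.
  + move=> x y lexy.
    case: (supP (fun y0 => exists r, D1 r <= x /\ y0 = D2 r)) => _ h; apply: h.
    move=> z [r [h1 ->]].
    case: (supP (fun y0 => exists r, D1 r <= y /\ y0 = D2 r)) => h' _; apply: h'.
    exists r; split => //; exact: le_trans h1 lexy.
  + move=> r; apply/eqP; rewrite eq_le; apply/andP; split.
    * case: (supP (fun y0 => exists r', D1 r' <= D1 r /\ y0 = D2 r')) => _ h; apply: h.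
      move=> z [r' [h1 ->]]; exact: (H r' r h1).
    * case: (supP (fun y0 => exists r', D1 r' <= D1 r /\ y0 = D2 r')) => h _; apply: h.
      by exists r.
- move=> [f [hf hD]] r r'; rewrite /U -!hD; exact: hf.
Qed.
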